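(* Let $c\ge2$ and let $\Gamma$ be a $c$-uniform unoriented hypergraph with $E\neq\varnothing$, strong coloring number $\chi=\chi(\Gamma)$ and smallest normalized Laplacian eigenvalue $\lambda_1$. (1) If $\chi=c$, then $\lambda_1=0$, and $0$ is an eigenvalue of $L$ with multiplicity at least $c-1$. (2) If $\lambda_1=0$, then $\chi=\dfrac{c-\lambda_1}{1-\lambda_1}$ holds if and only if $\chi=c$.
   Context: A hypergraph here is a finite vertex set $V$, $|V|=N$, with an edge set $E\subseteq\mathcal P(V)$. It is $c$-uniform if $|e|=c$ for all $e\in E$, and unoriented means all vertex–edge incidences have orientation $+1$. The degree is $\deg v=|\{e\in E: v\in e\}|$, assumed $\ge1$ for all $v$; $D=\mathrm{diag}(\deg v)$. The adjacency matrix has $A_{v,v}=0$ and, for $v\neq w$, $A_{v,w}=-|\{e\in E: v,w\in e\}|$. The normalized Laplacian is $L=\mathrm{Id}-D^{-1}A$, with real eigenvalues $\lambda_1\le\dots\le\lambda_N$ (for such $\Gamma$ one has $\lambda_N=c$ and $0\le\lambda_1<1$). A proper strong $k$-coloring is a map $V\to\{1,\dots,k\}$ such that any two distinct vertices in a common edge receive different colors; $\chi(\Gamma)$ is the least such $k$. *)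

(* Defs.v *)
From HB Require Import structures.
From mathcomp Require Import all_boot all_order all_algebra.
Set Implicit Arguments. Unset Strict Implicit. Unset Printing Implicit Defensive.
Import Order.TTheory GRing.Theory Num.Theory.
Local Open Scope ring_scope.

Section Hyper.
Variable n : nat.
Implicit Types (E : {set {set 'I_n}}).

Definition uniform E (c : nat) : Prop := forall e, e \in E -> #|e| = c.

Definition hdeg E (v : 'I_n) : nat := #|[set e in E | v \in e]|.

Definition hcommon E (v w : 'I_n) : nat := #|[set e in E | (v \in e) && (w \in e)]|.

Variable R : rcfType.

Definition degmx E : 'M[R]_n := diag_mx (\row_i (hdeg E i)%:R).

Definition adjmx E : 'M[R]_n :=
  \matrix_(v, w) (if v == w then 0 else - (hcommon E v w)%:R).

Definition nlap E : 'M[R]_n := 1%:M - invmx (degmx E) *m adjmx E.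

Definition smallest_eigenvalue (M : 'M[R]_n) (lam : R) : Prop :=
  eigenvalue M lam /\ forall mu, eigenvalue M mu -> lam <= mu.

End Hyper.

Definition strong_coloring n (E : {set {set 'I_n}}) k (f : 'I_n -> 'I_k) : Prop :=
  forall e, e \in E -> forall v w, v \in e -> w \in e -> v != w -> f v != f w.

Definition is_strong_chromatic_number n (E : {set {set 'I_n}}) (chi : nat) : Prop :=
  (exists f : 'I_n -> 'I_chi, strong_coloring E f) /\
  (forall k (f : 'I_n -> 'I_k), strong_coloring E f -> (chi <= k)%N).

(* Main.v *)
Require Import Defs.
From HB Require Import structures.
From mathcomp Require Import all_boot all_order all_algebra.
From mathcomp Require Import ring lra.
Set Implicit Arguments. Unset Strict Implicit.
Import Order.TTheory GRing.Theory Num.Theory.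
Local Open Scope ring_scope.
Lemma geom_mult (F : fieldType) n (L P : 'M[F]_n) (S : {set 'I_n}) :
  P \in unitmx -> (forall i j, i \in S -> (P *m L) i j = 0) ->
  (#|S| <= mup 0 (char_poly L))%N.
Proof.
move=> Pu PL0.
pose d := \row_(i < n) (if i \in S then 'X else 1 : {poly F}).
pose Q : 'M[{poly F}]_n := \matrix_(i,j) if i \in S then (P i j)%:P
   else (map_mx polyC P *m char_poly_mx L) i j.
have eq1 : map_mx polyC P *m char_poly_mx L = diag_mx d *m Q.
  apply/matrixP => i j; rewrite mul_diag_mx mxE [d 0 i]mxE [Q i j]mxE.
  case: ifP => iS; last by rewrite mul1r.
  rewrite /char_poly_mx mulmxBr mul_mx_scalar -map_mxM; move: (PL0 i j iS); rewrite !mxE => ->.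
  by rewrite subr0 mulrC.
have eq2 : (\det P)%:P * char_poly L = 'X^#|S| * \det Q.
  rewrite /char_poly -det_map_mx. rewrite -det_mulmx eq1 det_mulmx det_diag.
  congr (_ * _); rewrite (bigID (mem S)) /= [X in _ * X]big1 ?mulr1.
    by rewrite (eq_bigr (fun=> 'X)) ?prodr_const // => i iS; rewrite mxE iS.
  by move=> i /negPf iS; rewrite mxE iS.
have dP : \det P != 0 by rewrite -unitfE -unitmxE.
rewrite mup_geq ?monic_neq0 ?char_poly_monic // subr0.
by rewrite -(dvdpZr _ _ dP) -mul_polyC eq2 dvdp_mulr.
Qed.
Import Order.TTheory GRing.Theory Num.Theory.
Local Open Scope ring_scope.

Section H.
Variables (R : rcfType) (n : nat) (E : {set {set 'I_n}}).
Hypothesis hpos : forall v, (0 < hdeg E v)%N.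
Local Notation d v := ((hdeg E v)%:R : R).

Lemma hcommon_sum v w : ((hcommon E v w)%:R : R) =
  \sum_(e in E) ((v \in e) && (w \in e))%:R.
Proof.
rewrite /hcommon -sum1_card natr_sum big_mkcond /= [RHS]big_mkcond /=.
apply: eq_bigr => e _; rewrite inE.
by case: (e \in E); case: (v \in e); case: (w \in e).
Qed.

Lemma hcommon_diag v : hcommon E v v = hdeg E v.
Proof. by rewrite /hcommon /hdeg; apply: eq_card => e; rewrite !inE andbb. Qed.

Lemma d_neq0 v : d v != 0.
Proof. by rewrite pnatr_eq0 -lt0n hpos. Qed.

Lemma d_gt0 v : 0 < d v.
Proof. by rewrite ltr0n hpos. Qed.

Lemma invmx_deg : invmx (degmx R E) = diag_mx (\row_i (d i)^-1).
Proof.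
have Du : degmx R E \in unitmx.
  rewrite unitmxE det_diag unitfE; apply/prodf_neq0 => i _.
  by rewrite mxE d_neq0.
have h : diag_mx (\row_i (d i)^-1) *m degmx R E = 1%:M.
  apply/matrixP => i j; rewrite mul_diag_mx !mxE.
  case: eqP => [->|_]; last by rewrite mulr0n mulr0.
  by rewrite mulr1n mulVf ?d_neq0.
by rewrite -[RHS]mulmx1 -(mulmxV Du) mulmxA h mul1mx.
Qed.

Lemma nlapE v w : nlap R E v w = (hcommon E v w)%:R / d v.
Proof.
rewrite /nlap invmx_deg mul_diag_mx !mxE.
case: eqP => [->|/eqP ne]; first by rewrite mulr0 subr0 hcommon_diag divff ?d_neq0.
by rewrite sub0r mulrN opprK mulrC.
Qed.

Lemma eig_ge0 mu : eigenvalue (nlap R E) mu -> 0 <= mu.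
Proof.
move=> /eigenvalueP [v Hv vnz].
pose y l := v 0 l / d l.
have key j : \sum_l y l * (hcommon E l j)%:R = mu * v 0 j.
  move/matrixP: Hv => /(_ 0 j); rewrite !mxE => <-.
  apply: eq_bigr => l _; rewrite nlapE /y; by rewrite mulrA mulrAC.
have T1 : 0 <= \sum_j y j * \sum_l y l * (hcommon E l j)%:R.
  have -> : \sum_j y j * \sum_l y l * (hcommon E l j)%:R =
     \sum_(e in E) (\sum_j y j * (j \in e)%:R) * (\sum_l y l * (l \in e)%:R).
    under eq_bigr => j _ do (rewrite mulr_sumr; under eq_bigr => l _ do
       rewrite hcommon_sum !mulr_sumr).
    rewrite exchange_big /=; under eq_bigr => l _ do rewrite exchange_big /=.
    rewrite exchange_big /=; apply: eq_bigr => e _.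
    rewrite mulr_suml; apply: eq_bigr => j _; rewrite mulr_sumr.
    apply: eq_bigr => l _.
    by case: (l \in e); case: (j \in e); rewrite /= ?mulr0 ?mulr1 ?mul0r // mulrC.
  apply: sumr_ge0 => e _; rewrite -expr2; exact: sqr_ge0.
have T2 : \sum_j y j * \sum_l y l * (hcommon E l j)%:R =
    mu * \sum_j (v 0 j) ^+ 2 / d j.
  rewrite mulr_sumr; apply: eq_bigr => j _; rewrite key /y.
  by rewrite expr2; field; rewrite d_neq0.
have [j0 vj0] : exists j, v 0 j != 0.
  apply/existsP; rewrite -negb_forall; apply: contra vnz => /forallP H.
  by apply/eqP/rowP => j; rewrite mxE; apply/eqP.
have S0 : 0 < \sum_j (v 0 j) ^+ 2 / d j.
  rewrite (bigD1 j0) //=; apply: ltr_wpDr.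
    by apply: sumr_ge0 => j _; apply: divr_ge0; [exact: sqr_ge0| exact: ltW (d_gt0 j)].
  by apply: divr_gt0; [rewrite exprn_even_gt0 //| exact: d_gt0].
by move: T1; rewrite T2 pmulr_lge0.
Qed.

Variables (c : nat) (f : 'I_n -> 'I_c).
Hypothesis unif : uniform E c.
Hypothesis fcol : strong_coloring E f.

Lemma f_inj e : e \in E -> {in e &, injective f}.
Proof.
move=> eE v w ve we fvw; apply/eqP; apply: contraT => nvw.
by move: (fcol eE ve we nvw); rewrite fvw eqxx.
Qed.

Lemma count1 e k : e \in E -> #|[set l in e | f l == k]| = 1%N.
Proof.
move=> eE.
have im : f @: e = setT.
  apply/eqP; rewrite eqEcard subsetT cardsT card_ord card_in_imset ?unif //.
  by rewrite leqnn. exact: f_inj.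
have : k \in f @: e by rewrite im inE.
case/imsetP => l le ->.
rewrite (_ : [set x in e | f x == f l] = [set l]) ?cards1 //.
apply/setP => x; rewrite !inE; apply/andP/eqP => [[xe /eqP]|->]; last by rewrite le.
by move=> fxl; exact: (f_inj eE xe le fxl).
Qed.

Lemma sum_col e k : e \in E ->
  \sum_l ((l \in e) && (f l == k))%:R = (1 : R).
Proof.
move=> eE; rewrite -[RHS]/((1%N)%:R) -(count1 k eE) -sum1_card natr_sum [RHS]big_mkcond /=.
by apply: eq_bigr => l _; rewrite inE; case: (_ && _).
Qed.
End H.

Lemma natr_and (R : rcfType) (a b : bool) : ((a && b)%:R : R) = a%:R * b%:R.
Proof. by case: a; case: b; rewrite /= ?mulr1 ?mulr0. Qed.

Theorem mainTheorem4 (R : rcfType) (n c : nat) (E : {set {set 'I_n}})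
    (chi : nat) (lam1 : R) :
  (2 <= c)%N ->
  uniform E c ->
  E != set0 ->
  (forall v, (0 < hdeg E v)%N) ->
  is_strong_chromatic_number E chi ->
  smallest_eigenvalue (nlap R E) lam1 ->
  (chi = c -> lam1 = 0 /\ (c.-1 <= mup 0 (char_poly (nlap R E)))%N) /\
  (lam1 = 0 -> (chi%:R = (c%:R - lam1) / (1 - lam1) <-> chi = c)).
Proof.
move=> c2 unif HE hpos [[g gcol] chimin] [eig1 small].
split; last first.
  move=> ->; rewrite !subr0 divr1; split => [/eqP|->//]; by rewrite eqr_nat => /eqP.
move=> chic; subst chi.
case/set0Pn: HE => e0 e0E.
have ce0 := unif e0 e0E.
have : (0 < #|e0|)%N by rewrite ce0 (leq_trans _ c2).
rewrite card_gt0 => /set0Pn [v0 v0e].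
pose S := e0 :\ v0.
have cS : #|S| = c.-1 by rewrite /S; move: (cardsD1 v0 e0); rewrite v0e ce0 => ->.
pose k0 := g v0.
pose L := nlap R E.
pose P : 'M[R]_n := \matrix_(i,j) if i \in S then
   (hdeg E j)%:R * ((g j == g i)%:R - (g j == k0)%:R) else (i == j)%:R.
have PL0 : forall i j, i \in S -> (P *m L) i j = 0.
  move=> i j iS; rewrite mxE.
  under eq_bigr => l _ do rewrite mxE iS (nlapE R hpos).
  transitivity (\sum_l ((g l == g i)%:R - (g l == k0)%:R) * (hcommon E l j)%:R : R).
    apply: eq_bigr => l _; field; exact: d_neq0.
  under eq_bigr => l _ do rewrite hcommon_sum mulr_sumr.
  rewrite exchange_big /= big1 // => e eE.
  transitivity ((j \in e)%:R * (\sum_l ((l \in e) && (g l == g i))%:R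
      - \sum_l ((l \in e) && (g l == k0))%:R) : R).
    rewrite -sumrB mulr_sumr; apply: eq_bigr => l _.
    rewrite !natr_and; ring.
  by rewrite !(sum_col R unif gcol) // subrr mulr0.
have Pu : P \in unitmx.
  rewrite -row_free_unit -kermx_eq0; apply/eqP.
  have K0 : forall x : 'M[R]_n, x *m P = 0 -> x = 0.
    move=> x xP0.
    have PS : forall i j, j \in S -> P i j = (i == j)%:R * (hdeg E j)%:R.
      move=> i j jS; rewrite mxE.
      move: (jS); rewrite in_setD1 => /andP [jv0 je0].
      have gj : (g j == k0) = false.
        apply/negbTE; apply: contra jv0 => /eqP h; apply/eqP.
        exact: (f_inj gcol e0E je0 v0e h).
      case: ifP => iS.
        move: (iS); rewrite in_setD1 => /andP [_ ie0].
        have -> : (g j == g i) = (j == i).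
          apply/eqP/eqP => [h|->//]; exact: (f_inj gcol e0E je0 ie0 h).
        by rewrite gj subr0 eq_sym mulrC.
      have -> : (i == j) = false by apply: contraFF iS => /eqP ->.
      by rewrite mul0r.
    have xS : forall r j, j \in S -> x r j = 0.
      move=> r j jS; move/matrixP: xP0 => /(_ r j); rewrite !mxE.
      rewrite (bigD1 j) //= big1 => [|i ij]; last by rewrite PS // (negbTE ij) mul0r mulr0.
      rewrite PS // eqxx mul1r addr0 => /eqP; rewrite mulf_eq0 (negbTE (d_neq0 R hpos j)) orbF.
      by move/eqP.
    apply/matrixP => r j; rewrite [RHS]mxE; case: (boolP (j \in S)) => jS; first exact: xS.
    move/matrixP: xP0 => /(_ r j); rewrite !mxE (bigD1 j) //= big1 => [|i ij].
      by rewrite mxE (negbTE jS) eqxx mulr1 addr0.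
    rewrite mxE; case: ifP => iS; first by rewrite xS // mul0r.
    by rewrite (negbTE ij) mulr0.
  by apply: K0; exact: mulmx_ker.
have mu := geom_mult Pu PL0; rewrite cS in mu.
have e0L : eigenvalue L 0.
  rewrite eigenvalue_root_char -dvdp_XsubCl XsubC_dvd ?monic_neq0 ?char_poly_monic //.
  have c1 : (0 < c.-1)%N by rewrite -ltnS prednK // ltnW.
  exact: leq_trans c1 mu.
split => //.
by apply/le_anti; rewrite small // (eig_ge0 hpos).
Qed.
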